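(* Let $m\ge 2$ be an integer and let $\mathcal{A}\subset\mathbb{R}$ be a finite alphabet. Let $(X^{(j)}_i)_{i\ge 1,\,1\le j\le m}$ be independent and identically distributed random variables with values in $\mathcal{A}$. Let $S:\mathcal{A}^m\to[0,\infty)$ be a function that is not identically zero, is invariant under permutations of its $m$ arguments, satisfies $\sup_{x\in\mathcal{A}^m}S(x)<\infty$, and for which there is a constant $D>0$ such that $|S(x)-S(y)|\le D$ whenever $x,y\in\mathcal{A}^m$ differ in at most one coordinate. For $q=(q_1,\dots,q_m)$ in the domain $Q:=\{q\in(0,\infty)^m:\ q_1+\cdots+q_m=m\}$ let $$\widetilde{\gamma}^*(q):=\lim_{n\to\infty}\frac1n\,\mathbb{E}\Big(L\big(X^{(1)}_1\cdots X^{(1)}_{\lceil nq_1\rceil};\ \cdots;\ X^{(m)}_1\cdots X^{(m)}_{\lceil nq_m\rceil}\big)\Big).$$ Then $\widetilde{\gamma}^*$ is concave on $Q$. In particular, $\widetilde{\gamma}^*$ attains its maximum over $Q$ at $q_1=\cdots=q_m=1$.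
   Context: Alignments and optimal score: for finite words $w^{(1)},\dots,w^{(m)}$ over $\mathcal{A}$ of lengths $\ell_1,\dots,\ell_m$, an alignment is a choice of an integer $k\ge 0$ and, for each $j$, indices $1\le \pi^{(j)}_1<\cdots<\pi^{(j)}_k\le \ell_j$; its score is $\sum_{i=1}^k S(w^{(1)}_{\pi^{(1)}_i},\dots,w^{(m)}_{\pi^{(m)}_i})$. The optimal score $L(w^{(1)};\dots;w^{(m)})$ is the maximum score over all alignments. The limit defining $\widetilde{\gamma}^*$ exists (by superadditivity). *)

(* Defs.v *)
From HB Require Import structures.
From mathcomp Require Import all_boot all_order all_algebra.
From mathcomp Require Import finmap.
From mathcomp Require Import all_classical all_reals all_analysis.
Set Implicit Arguments.
Unset Strict Implicit.
Unset Printing Implicit Defensive.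
Import Order.TTheory GRing.Theory Num.Theory.
Local Open Scope classical_set_scope.
Local Open Scope ring_scope.
Local Open Scope fset_scope.

Section Align.
Variables (R : realType) (A : {fset R}) (m : nat).

Definition apoint := {ffun 'I_m -> A}.

Variable S : apoint -> R.

(* An alignment of the words w_1,...,w_m: an integer k and, for each j,
   strictly increasing indices pi_j : {0..k-1} -> {0..|w_j|-1}
   (0-based version of 1 <= pi_1 < ... < pi_k <= l_j). *)
Definition is_alignment (w : 'I_m -> seq A) (k : nat)
    (pi : forall j : 'I_m, 'I_k -> 'I_(size (w j))) : Prop :=
  forall (j : 'I_m) (i1 i2 : 'I_k), (i1 < i2)%N -> (pi j i1 < pi j i2)%N.

Definition align_score (w : 'I_m -> seq A) (k : nat)
    (pi : forall j : 'I_m, 'I_k -> 'I_(size (w j))) : R :=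
  \sum_(i < k) S [ffun j => tnth (in_tuple (w j)) (pi j i)].

Definition opt_score (w : 'I_m -> seq A) : R :=
  sup [set r : R | exists k (pi : forall j : 'I_m, 'I_k -> 'I_(size (w j))),
                     is_alignment pi /\ r = align_score pi].

(* The i.i.d. letters X^(j)_i, 1 <= j <= m, 1 <= i <= N, each with law p on A,
   are realised on the finite sample space {ffun 'I_m * 'I_N -> A} with the
   product probability  omega |-> prod_(j,i) p (omega (j,i)). *)
Definition sample_prob (p : A -> R) (N : nat) (omega : {ffun 'I_m * 'I_N -> A}) : R :=
  \prod_(x : 'I_m * 'I_N) p (omega x).

Definition sample_word (N : nat) (omega : {ffun 'I_m * 'I_N -> A})
    (ns : 'I_m -> nat) (j : 'I_m) : seq A :=
  take (ns j) [seq omega (j, i) | i <- enum 'I_N].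

Definition expected_L (p : A -> R) (ns : 'I_m -> nat) : R :=
  let N := (\max_(j < m) ns j)%N in
  \sum_(omega : {ffun 'I_m * 'I_N -> A})
     sample_prob p omega * opt_score (sample_word omega ns).

Definition gamma_tilde (p : A -> R) (q : 'I_m -> R) : R :=
  lim ((fun n : nat =>
          (expected_L p (fun j => `|Num.ceil (n%:R * q j)|%N) / n%:R : R^o))
         @ \oo).

End Align.

Definition domQ (R : realType) (m : nat) (q : 'I_m -> R) : Prop :=
  (forall j, 0 < q j) /\ \sum_(j < m) q j = m%:R.

(* Main.v *)
Require Import Defs.
From HB Require Import structures.
From mathcomp Require Import all_boot all_order all_algebra.
From mathcomp Require Import finmap perm.
From mathcomp Require Import all_classical all_reals all_analysis.
From mathcomp Require Import ring lra.
Import Order.TTheory GRing.Theory Num.Theory.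
Local Open Scope classical_set_scope.
Local Open Scope ring_scope.
Section LimAux.
Variable R : realType.

Lemma lim_epsP (v : nat -> R) (l : R) :
  (forall e : R, 0 < e -> exists N, forall n, (N <= n)%N -> `|v n - l| <= e) ->
  ((fun n : nat => (v n : R^o)) @ \oo --> (l : R^o)).
Proof.
move=> H; apply/cvgrPdist_le => e e0.
have [N HN] := H e e0.
exists N => // n /= Nn; rewrite distrC; exact: HN.
Qed.

Lemma lim_epsE (v : nat -> R) (l : R) :
  (forall e : R, 0 < e -> exists N, forall n, (N <= n)%N -> `|v n - l| <= e) ->
  lim ((fun n : nat => (v n : R^o)) @ \oo) = l.
Proof. by move=> H; apply: cvg_lim => //; apply: lim_epsP. Qed.

Lemma cvg_eps (v : nat -> R) :
  cvg ((fun n : nat => (v n : R^o)) @ \oo) ->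
  forall e : R, 0 < e -> exists N, forall n, (N <= n)%N ->
    `|v n - lim ((fun n : nat => (v n : R^o)) @ \oo)| <= e.
Proof.
move=> /cvgrPdist_le H e e0.
have [N _ HN] := H e e0.
exists N => n Nn; rewrite distrC; exact: HN.
Qed.

End LimAux.
Section Fekete.
Variable R : realType.

Lemma iter_sup (h : nat -> R) :
  (forall a b, h a + h b <= h (a + b)%N) ->
  forall k r d, d%:R * h k + h r <= h (d * k + r)%N.
Proof.
move=> hs k r; elim=> [|d IH]; first by rewrite mul0r add0r mul0n add0n.
rewrite mulSn -addnA.
apply: le_trans (hs _ _); rewrite -nat1r mulrDl mul1r -addrA lerD2l; exact: IH.
Qed.

Lemma fekete_lb (h : nat -> R) (C : R) :
  (forall a b, h a + h b <= h (a + b)%N) -> (forall n, - C <= h n) ->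
  forall k n, (0 < k)%N -> (0 < n)%N ->
  h k / k%:R - (`|h k| + C) / n%:R <= h n / n%:R.
Proof.
move=> hs hC k n k0 n0.
have k0' : 0 < (k%:R : R) by rewrite ltr0n.
have n0' : 0 < (n%:R : R) by rewrite ltr0n.
set d := (n %/ k)%N; set r := (n %% k)%N.
have en : n = (d * k + r)%N by rewrite /d /r -divn_eq.
have H1 := @iter_sup h hs k r d. rewrite -en in H1.
have H2 := hC r.
have eR : (n%:R : R) = d%:R * k%:R + r%:R by rewrite en natrD natrM.
have rk : (r%:R : R) < k%:R by rewrite ltr_nat /r ltn_mod.
have r0 : 0 <= (r%:R : R) by [].
have d0 : 0 <= (d%:R : R) by [].
have key : n%:R * h k - k%:R * (`|h k| + C) <= h n * k%:R.
  have [hk0|hk0] := lerP 0 (h k).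
    rewrite ger0_norm //. rewrite eR. nra.
  rewrite ltr0_norm //. rewrite eR. nra.
have -> : h k / k%:R - (`|h k| + C) / n%:R
   = (n%:R * h k - k%:R * (`|h k| + C)) / (n%:R * k%:R).
  by field; apply/andP; split; rewrite gt_eqF.
have -> : h n / n%:R = (h n * k%:R) / (n%:R * k%:R).
  by field; apply/andP; split; rewrite gt_eqF.
apply: ler_wpM2r => //; rewrite invr_ge0; apply: mulr_ge0; exact: ltW.
Qed.

End Fekete.
Section Fekete2.
Variable R : realType.

Lemma fekete (u : nat -> R) (C K : R) :
  0 <= C ->
  (forall a b, u a + u b - C <= u (a + b)%N) ->
  (forall n, 0 <= u n) ->
  (forall n, (0 < n)%N -> u n <= K * n%:R) ->
  cvg ((fun n : nat => (u n / n%:R : R^o)) @ \oo).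
Proof.
move=> C0 us u0 uK.
pose h n := u n - C.
have hs : forall a b, h a + h b <= h (a + b)%N.
  move=> a b; rewrite /h; have := us a b; lra.
have hC : forall n, - C <= h n by move=> n; rewrite /h; have := u0 n; lra.
pose E := [set x : R | exists2 n, (0 < n)%N & x = h n / n%:R].
have ubE : ubound E K.
  move=> x [n n0 ->]; rewrite ler_pdivrMr ?ltr0n //.
  have := uK n n0; rewrite /h; lra.
have supE : has_sup E by split; [exists (h 1%N / 1%:R); exists 1%N | exists K].
have supub := ub_le_sup (proj2 supE).
apply: (@cvgP _ _ (sup E : R^o)); apply: lim_epsP => e e0.
have e20 : 0 < e / 2 by rewrite divr_gt0.
have [x [n1 n10 ->] hx] := sup_adherent e20 supE.
pose M : R := `|h n1| + C.
have M0 : 0 <= M by rewrite /M addr_ge0.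
exists ((Num.truncn (M / (e / 2))).+1 + n1)%N => n Nn.
have n0 : (0 < n)%N by apply: leq_trans Nn; rewrite addSn.
have n0' : 0 < (n%:R : R) by rewrite ltr0n.
have Mn : M / n%:R <= e / 2.
  rewrite ler_pdivrMr //.
  have t1 := truncnS_gt (M / (e / 2)).
  have t2 : ((Num.truncn (M / (e / 2))).+1%:R : R) <= n%:R.
    by rewrite ler_nat; apply: leq_trans Nn; rewrite leq_addr.
  have : M / (e / 2) < n%:R by apply: lt_le_trans t2.
  rewrite ltr_pdivrMr //; lra.
have lb := @fekete_lb R h C hs hC n1 n n10 n0; rewrite -/M in lb.
have ub : h n / n%:R <= sup E by apply: supub; exists n.
have eu : u n / n%:R = h n / n%:R + C / n%:R by rewrite /h; field; rewrite gt_eqF.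
have CM : C / n%:R <= M / n%:R.
  by apply: ler_wpM2r; [rewrite invr_ge0 ltW | rewrite /M lerDr].
rewrite ler_norml eu; apply/andP; split.
all: have Cn : 0 <= C / n%:R by rewrite divr_ge0.
all: have ee : e / 2 + e / 2 = e by field.
all: lra.
Qed.

End Fekete2.
Section Gamma.
Variables (R : realType) (m : nat) (F : ('I_m -> nat) -> R) (B : R).
Hypothesis B0 : 0 <= B.
Hypothesis F0 : forall l, 0 <= F l.
Hypothesis Fsup : forall l l', F l + F l' <= F (fun j => (l j + l' j)%N).
Hypothesis Flip : forall l l', F l - F l' <= B * \sum_j `|(l j)%:R - (l' j)%:R|.

Definition cc (q : 'I_m -> R) (n : nat) : 'I_m -> nat :=
  fun j => `|Num.ceil (n%:R * q j)|%N.

Definition gam (q : 'I_m -> R) : R :=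
  lim ((fun n : nat => (F (cc q n) / n%:R : R^o)) @ \oo).

Lemma cc_bnd q n j : 0 <= q j ->
  n%:R * q j <= (cc q n j)%:R < n%:R * q j + 1.
Proof.
move=> q0; rewrite /cc natr_absz ger0_norm; last first.
  by rewrite ceil_ge0; apply: lt_le_trans (mulr_ge0 (ler0n _ _) q0); rewrite ltrN10.
have := ceil_itv (n%:R * q j); rewrite intrD => /andP[h1 h2].
by rewrite h2 /=; move: h1; rewrite (_ : (-1)%:~R = -1 :> R) //; lra.
Qed.

Lemma big_nat_gt (y : R) : exists N, forall n, (N <= n)%N -> y < n%:R.
Proof.
exists (Num.truncn y).+1 => n Nn; apply: lt_le_trans (truncnS_gt y) _.
by rewrite ler_nat.
Qed.

Lemma gam_cvg q : (forall j, 0 <= q j) ->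
  cvg ((fun n : nat => (F (cc q n) / n%:R : R^o)) @ \oo).
Proof.
move=> q0.
apply: (@fekete R (fun n => F (cc q n)) (B * \sum_(j < m) 2)
          (F (fun _ => 0%N) + B * \sum_j (q j + 1))).
- by apply: mulr_ge0 => //; apply: sumr_ge0.
- move=> a b; have := Flip (fun j => (cc q a j + cc q b j)%N) (cc q (a + b)).
  have := Fsup (cc q a) (cc q b).
  have : B * \sum_j `|(cc q a j + cc q b j)%:R - (cc q (a + b) j)%:R| <= B * \sum_(j < m) 2.
    apply: ler_wpM2l => //; apply: ler_sum => j _.
    have := cc_bnd q a j (q0 j); have := cc_bnd q b j (q0 j); have := cc_bnd q (a + b) j (q0 j).
    rewrite natrD ler_norml => /andP[? ?] /andP[? ?] /andP[? ?]; apply/andP; split; nra.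
  lra.
- by [].
- move=> n n0.
  have := Flip (cc q n) (fun _ => 0%N).
  have : B * \sum_j `|(cc q n j)%:R - (0%N)%:R| <= n%:R * (B * \sum_j (q j + 1)).
    rewrite mulrCA; apply: ler_wpM2l => //; rewrite mulr_sumr; apply: ler_sum => j _.
    have := cc_bnd q n j (q0 j); rewrite subr0 ger0_norm; last by [].
    have : (1 : R) <= n%:R by rewrite ler1n.
    have := q0 j; nra.
  have : F (fun _ => 0%N) <= n%:R * F (fun _ => 0%N).
    have : (1 : R) <= n%:R by rewrite ler1n.
    have := F0 (fun _ => 0%N); nra.
  lra.
Qed.

Lemma lim_ge_eps (v : nat -> R) (x : R) :
  cvg ((fun n : nat => (v n : R^o)) @ \oo) ->
  (forall e : R, 0 < e -> exists N, forall n, (N <= n)%N -> x - e <= v n) ->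
  x <= lim ((fun n : nat => (v n : R^o)) @ \oo).
Proof.
move=> cv H; apply/ler_addgt0Pr => e e0.
have e20 : 0 < e / 2 by rewrite divr_gt0.
have [N1 H1] := H _ e20.
have [N2 H2] := @cvg_eps R v cv _ e20.
have := H1 (N1 + N2)%N (leq_addr _ _); have := H2 (N1 + N2)%N (leq_addl _ _).
rewrite ler_norml => /andP[_ ?] ?.
have : e / 2 + e / 2 = e by field.
lra.
Qed.

Lemma gam_ext q q' : (forall j, q j = q' j) -> gam q = gam q'.
Proof. by move=> h; rewrite /gam (_ : q = q') //; apply: funext. Qed.

Lemma gam_concave q1 q2 t : (forall j, 0 <= q1 j) -> (forall j, 0 <= q2 j) ->
  0 <= t <= 1 ->
  t * gam q1 + (1 - t) * gam q2 <= gam (fun j => t * q1 j + (1 - t) * q2 j).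
Proof.
move=> q10 q20 /andP[t0 t1].
have [->|tn0] := eqVneq t 0.
  rewrite (@gam_ext (fun j => 0 * q1 j + (1 - 0) * q2 j) q2); last by move=> j; rewrite mul0r add0r subr0 mul1r.
  by rewrite mul0r add0r subr0 mul1r.
have [->|tn1] := eqVneq t 1.
  rewrite (@gam_ext (fun j => 1 * q1 j + (1 - 1) * q2 j) q1); last by move=> j; rewrite mul1r subrr mul0r addr0.
  by rewrite mul1r subrr mul0r addr0.
have tp : 0 < t by rewrite lt_neqAle eq_sym tn0.
have tq : t < 1 by rewrite lt_neqAle tn1.
set q := fun j => _.
have q0 : forall j, 0 <= q j.
  move=> j; rewrite /q; apply: addr_ge0; apply: mulr_ge0 => //; rewrite ?subr_ge0 //.
apply: lim_ge_eps; first exact: gam_cvg.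
move=> E E0; have e0 : 0 < E / 2 by rewrite divr_gt0.
have EE : E = E / 2 + E / 2 by field.
set e := E / 2 in e0 EE.
have [N1 H1] := @cvg_eps R _ (gam_cvg q1 q10) e e0.
have [N2 H2] := @cvg_eps R _ (gam_cvg q2 q20) e e0.
rewrite -/(gam q1) in H1; rewrite -/(gam q2) in H2.
set g1 := gam q1 in H1 *; set g2 := gam q2 in H2 *.
pose K0 := \sum_j (q1 j + q2 j + 2).
pose M0 := `|g1| + `|g2| + B * K0.
have [Na Ha] := big_nat_gt ((N1 + 1)%:R / t).
have [Nb Hb] := big_nat_gt ((N2 + 1)%:R / (1 - t)).
have [Nc Hc] := big_nat_gt (M0 / e).
exists (Na + Nb + Nc)%N => n Nn.
have na := Ha n (leq_trans (leq_trans (leq_addr Nb Na) (leq_addr Nc _)) Nn).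
have nb := Hb n (leq_trans (leq_trans (leq_addl Na Nb) (leq_addr Nc _)) Nn).
have nc := Hc n (leq_trans (leq_addl _ _) Nn).
have e1 : 0 < 1 - t by rewrite subr_gt0.
pose a := Num.truncn (n%:R * t).
have nt0 : 0 <= n%:R * t by rewrite mulr_ge0 // ltW.
have [aL aU] : (a%:R <= n%:R * t) /\ (n%:R * t < a%:R + 1).
  by have := truncn_itv nt0; rewrite -/a -natr1 => /andP[-> ->].
have an : (a <= n)%N.
  rewrite -(ler_nat R); have : n%:R * t <= n%:R by nra.
  lra.
pose b := (n - a)%N.
have bR : (b%:R : R) = n%:R - a%:R by rewrite natrB.
have n0 : 0 < (n%:R : R).
  have : 0 < (N1 + 1)%:R / t :> R by rewrite divr_gt0 // ltr0n addn1.
  lra.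
have aN1 : (N1 < a)%N.
  rewrite /a -addn1 truncn_ge_nat //; move: na; rewrite ltr_pdivrMr // => ?.
  by apply: ltW; move: aL; lra.
have bN2 : (N2 < b)%N.
  rewrite -addn1 -(ler_nat R) bR; move: nb; rewrite ltr_pdivrMr //; lra.
have a0 : 0 < (a%:R : R) by rewrite ltr0n; apply: leq_ltn_trans aN1.
have b0 : 0 < (b%:R : R) by rewrite ltr0n; apply: leq_ltn_trans bN2.
have u1 : a%:R * (g1 - e) <= F (cc q1 a).
  have := H1 a (ltnW aN1); rewrite ler_norml => /andP[h _].
  have : g1 - e <= F (cc q1 a) / a%:R by lra.
  by rewrite ler_pdivlMr // mulrC.
have u2 : b%:R * (g2 - e) <= F (cc q2 b).
  have := H2 b (ltnW bN2); rewrite ler_norml => /andP[h _].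
  have : g2 - e <= F (cc q2 b) / b%:R by lra.
  by rewrite ler_pdivlMr // mulrC.
have sup := Fsup (cc q1 a) (cc q2 b).
have lip := Flip (fun j => (cc q1 a j + cc q2 b j)%N) (cc q n).
have lipK : B * \sum_j `|(cc q1 a j + cc q2 b j)%:R - (cc q n j)%:R| <= B * K0.
  apply: ler_wpM2l => //; apply: ler_sum => j _.
  have := cc_bnd q1 a j (q10 j); have := cc_bnd q2 b j (q20 j);
    have := cc_bnd q n j (q0 j).
  have id : n%:R * q j - a%:R * q1 j - b%:R * q2 j
            = (n%:R * t - a%:R) * (q1 j - q2 j) by rewrite bR /q; ring.
  have d0 : 0 <= n%:R * t - a%:R by lra.
  have d1 : n%:R * t - a%:R <= 1 by lra.
  have h1 : 0 <= (n%:R * t - a%:R) * q1 j <= q1 j.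
    by apply/andP; split; [apply: mulr_ge0 | rewrite ler_piMl].
  have h2 : 0 <= (n%:R * t - a%:R) * q2 j <= q2 j.
    by apply/andP; split; [apply: mulr_ge0 | rewrite ler_piMl].
  move: h1 h2; rewrite natrD ler_norml => /andP[? ?] /andP[? ?] /andP[? ?] /andP[? ?] /andP[? ?].
  apply/andP; split; nra.
have ga : a%:R * g1 >= n%:R * t * g1 - `|g1|.
  have hh : `|a%:R - n%:R * t| <= 1 by rewrite ler_norml; apply/andP; split; lra.
  have : `|(a%:R - n%:R * t) * g1| <= `|g1|.
    by rewrite normrM ler_piMl //=.
  rewrite ler_norml => /andP[? ?]; nra.
have gb : b%:R * g2 >= n%:R * (1 - t) * g2 - `|g2|.
  have hh : `|b%:R - n%:R * (1 - t)| <= 1 by rewrite bR ler_norml; apply/andP; split; lra.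
  have : `|(b%:R - n%:R * (1 - t)) * g2| <= `|g2|.
    by rewrite normrM ler_piMl //=.
  rewrite ler_norml => /andP[? ?]; nra.
have ncM : M0 <= n%:R * e by move: nc; rewrite ltr_pdivrMr // mulrC; lra.
rewrite ler_pdivlMr //.
have abn : a%:R + b%:R = n%:R :> R by rewrite bR; ring.
have ae : a%:R * e + b%:R * e = n%:R * e by rewrite -mulrDl abn.
rewrite /M0 in ncM.
rewrite mulrBr in u1; rewrite mulrBr in u2.
have -> : (t * g1 + (1 - t) * g2 - E) * n%:R = n%:R * t * g1 + n%:R * (1 - t) * g2 - n%:R * e - n%:R * e.
  by rewrite EE; ring.
lra.
Qed.

Hypothesis Fperm : forall (s : 'S_m) l, F l <= F (fun j => l (s j)).

Lemma gam_perm q (s : 'S_m) : (forall j, 0 <= q j) -> gam q <= gam (fun j => q (s j)).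
Proof.
move=> q0; apply: lim_ge_eps; first by apply: gam_cvg => j; exact: q0.
move=> e e0.
have [N HN] := @cvg_eps R _ (gam_cvg q q0) e e0.
rewrite -/(gam q) in HN.
exists N => n Nn; have := HN n Nn; rewrite ler_norml => /andP[h _].
have : F (cc q n) / n%:R <= F (cc (fun j => q (s j)) n) / n%:R.
  by apply: ler_wpM2r; [rewrite invr_ge0 | exact: (Fperm s (cc q n))].
lra.
Qed.

Definition avg (q : 'I_m -> R) (s : seq 'S_m) (j : 'I_m) : R :=
  (\sum_(σ <- s) q (σ j)) / (size s)%:R.

Lemma avg_ge q s : (forall j, 0 <= q j) -> s != [::] -> gam q <= gam (avg q s).
Proof.
move=> q0; elim: s => [//|σ s IH] _.
have [->|sn] := eqVneq s [::].
  rewrite (@gam_ext (avg q [:: σ]) (fun j => q (σ j))); last first.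
    by move=> j; rewrite /avg big_seq1 /= divr1.
  exact: gam_perm.
have := IH sn.
set k := size s.
have k0 : (0 < k)%N by rewrite lt0n size_eq0.
have k0' : 0 < (k%:R : R) by rewrite ltr0n.
pose t : R := k%:R / (k.+1)%:R.
have t01 : 0 <= t <= 1.
  rewrite /t divr_ge0 //= ler_pdivrMr ?ltr0n // mul1r ler_nat; exact: leqnSn.
have av0 : forall j, 0 <= avg q s j.
  move=> j; rewrite /avg divr_ge0 //; apply: sumr_ge0 => i _; exact: q0.
rewrite (@gam_ext (avg q (σ :: s)) (fun j => t * avg q s j + (1 - t) * q (σ j))); last first.
  move=> j; rewrite /avg /t big_cons /= -/k.
  rewrite -natr1; field; apply/andP; split; rewrite gt_eqF //; lra.
move=> h1.
apply: (le_trans _ (gam_concave (avg q s) (fun j => q (σ j)) t av0 (fun j => q0 (σ j)) t01)).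
have := gam_perm q σ q0.
move: t01 => /andP[? ?]; nra.
Qed.

Lemma gam_max (q : 'I_m -> R) (m0 : (0 < m)%N) :
  (forall j, 0 <= q j) -> \sum_j q j = m%:R -> gam q <= gam (fun _ => 1).
Proof.
move=> q0 qs.
pose rotf (i j : 'I_m) : 'I_m := Ordinal (ltn_pmod (i + j) m0).
have rinj : forall i, injective (rotf i).
  move=> i j1 j2 /(congr1 val) /= /eqP; rewrite eqn_modDl !modn_small // => /eqP.
  exact: val_inj.
have rinj2 : forall j, injective (rotf^~ j).
  move=> j i1 i2 /(congr1 val) /= /eqP; rewrite eqn_modDr !modn_small // => /eqP.
  exact: val_inj.
pose rot i : 'S_m := perm (rinj i).
pose s := [seq rot i | i <- enum 'I_m].
have sn : s != [::].
  by rewrite -size_eq0 size_map size_enum_ord -lt0n.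
apply: (le_trans (avg_ge q s q0 sn) _).
rewrite (@gam_ext (avg q s) (fun _ => 1)) //.
move=> j; rewrite /avg size_map size_enum_ord big_map big_enum /=.
rewrite (_ : \sum_(i in 'I_m) q (rot i j) = \sum_i q i).
  by rewrite qs divff // pnatr_eq0 -lt0n.
rewrite [RHS](reindex_inj (rinj2 j)) /=; apply: eq_bigr => i _.
by rewrite /rot permE.
Qed.

End Gamma.
Lemma mkseq_take T (f : nat -> T) k n : take k (mkseq f n) = mkseq f (minn k n).
Proof. by rewrite /mkseq -map_take take_iota. Qed.

Lemma mkseq_add T (f : nat -> T) a b :
  mkseq f (a + b) = mkseq f a ++ mkseq (fun i => f (a + i)%N) b.
Proof.
by rewrite /mkseq iotaD map_cat add0n -[in iota a b](addn0 a) iotaDl -map_comp.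
Qed.

Lemma eq_in_mkseq T (f g : nat -> T) n :
  (forall i, (i < n)%N -> f i = g i) -> mkseq f n = mkseq g n.
Proof. by move=> H; apply/eq_in_map => i; rewrite mem_iota add0n => /H. Qed.

Section Main.
Variables (R : realType) (A : {fset R}) (m : nat) (S : apoint A m -> R) (p : A -> R).
Hypothesis p0 : forall a, 0 <= p a.
Hypothesis p1 : \sum_a p a = 1.
Variable a0 : A.
Variable B : R.
Hypothesis S0 : forall x, 0 <= S x.
Hypothesis SB : forall x, S x <= B.
Variable j0 : 'I_m.

Definition col := {ffun 'I_m -> nat}.
Definition ltc (c c' : col) : bool := [forall j, (c j < c' j)%N].
Definition valid (w : 'I_m -> seq A) (cs : seq col) : bool :=
  all (fun c : col => [forall j, (c j < size (w j))%N]) cs && pairwise ltc cs.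
Definition scr (w : 'I_m -> seq A) (cs : seq col) : R :=
  \sum_(c <- cs) S [ffun j => nth a0 (w j) (c j)].

Lemma sz_bound (s : seq nat) lo hi : pairwise ltn s ->
  all (fun x => lo <= x < hi)%N s -> (size s <= hi - lo)%N.
Proof.
move=> ps /allP al.
have u : uniq s := pairwise_uniq ltnn ps.
rewrite -(size_iota lo (hi - lo)); apply: uniq_leq_size => // x xs.
by rewrite -[iota _ _]/(index_iota lo hi) mem_index_iota al.
Qed.

Lemma col_bound (cs : seq col) {j lo hi} : pairwise ltc cs ->
  all (fun c : col => lo <= c j < hi)%N cs -> (size cs <= hi - lo)%N.
Proof.
move=> ps al; rewrite -(size_map (fun c : col => c j)); apply: sz_bound.
  rewrite pairwise_map; apply: sub_pairwise ps => c c' /forallP; exact.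
by rewrite all_map.
Qed.

Lemma valid_size w cs j : valid w cs -> (size cs <= size (w j))%N.
Proof.
case/andP=> al ps; rewrite -[X in (_ <= X)%N](subn0 (size (w j))); apply: (@col_bound cs j 0 (size (w j)) ps); by apply: sub_all al => c /forallP /(_ j) ->.
Qed.

Lemma B0 : 0 <= B.
Proof. exact: le_trans (S0 [ffun _ => a0]) (SB _). Qed.

Lemma scr_bound w cs : scr w cs <= (size cs)%:R * B.
Proof.
elim: cs => [|c cs IH]; first by rewrite /scr big_nil mul0r.
by rewrite /scr big_cons -/(scr w cs) /= -nat1r mulrDl mul1r lerD.
Qed.

Lemma scr_ge0 w cs : 0 <= scr w cs.
Proof. by apply: sumr_ge0 => c _. Qed.

Lemma cs_to_pi (w : 'I_m -> seq A) (cs : seq col) : valid w cs -> exists k (pi : forall j, 'I_k -> 'I_(size (w j))),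
  is_alignment pi /\ align_score S pi = scr w cs.
Proof.
case/andP=> al ps.
have Hc : forall (j : 'I_m) (i : 'I_(size cs)), (nth [ffun=> 0%N] cs i j < size (w j))%N.
  move=> j i; have := (all_nthP [ffun=> 0%N] al) i (ltn_ord i).
  by move/forallP/(_ j).
exists (size cs), (fun j i => Ordinal (Hc j i)); split.
  move=> j i1 i2 lt12 /=.
  have := (pairwiseP [ffun=> 0%N] ps) i1 i2 (ltn_ord i1) (ltn_ord i2) lt12.
  by move/forallP/(_ j).
rewrite /align_score /scr (big_nth [ffun=> 0%N]) big_mkord; apply: eq_bigr => i _.
by congr S; apply/ffunP => j; rewrite !ffunE (tnth_nth a0).
Qed.

Lemma pi_to_cs (w : 'I_m -> seq A) (k : nat) (pi : forall j, 'I_k -> 'I_(size (w j))) : is_alignment pi ->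
  exists cs, valid w cs /\ align_score S pi = scr w cs.
Proof.
move=> al.
exists [seq [ffun j => nat_of_ord (pi j i)] | i <- enum 'I_k]; split.
  apply/andP; split.
    by rewrite all_map; apply/allP => i _ /=; apply/forallP => j; rewrite ffunE.
  rewrite pairwise_map.
  have : pairwise (relpre val ltn) (enum 'I_k).
    by rewrite -pairwise_map val_enum_ord -sorted_pairwise ?iota_ltn_sorted //; exact: ltn_trans.
  apply: sub_pairwise => i1 i2 /= lt12; apply/forallP => j; rewrite !ffunE; exact: al.
rewrite /scr big_map big_enum /align_score; apply: eq_bigr => i _.
by congr S; apply/ffunP => j; rewrite !ffunE (tnth_nth a0).
Qed.

Arguments pi_to_cs {_ _ _}.
Arguments cs_to_pi {_ _}.

Lemma opt_hub w : has_ubound [set r : R | exists k (pi : forall j : 'I_m, 'I_k -> 'I_(size (w j))),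
                     is_alignment pi /\ r = align_score S pi].
Proof.
exists ((size (w j0))%:R * B) => r [k [pi [al ->]]].
have [cs [vcs ->]] := pi_to_cs al.
apply: le_trans (scr_bound w cs) _; apply: ler_wpM2r; first exact: B0.
by rewrite ler_nat; apply: valid_size.
Qed.

Lemma opt_ub w cs : valid w cs -> scr w cs <= opt_score S w.
Proof.
move=> v; have [k [pi [al e]]] := cs_to_pi v.
by apply: (ub_le_sup (opt_hub w)); exists k, pi; split.
Qed.

Lemma opt_lub w x : (forall cs, valid w cs -> scr w cs <= x) -> opt_score S w <= x.
Proof.
move=> H; apply: ge_sup.
  have v0 : valid w [::] by [].
  have [k [pi [al e]]] := cs_to_pi v0.
  by exists (scr w [::]), k, pi; split.
move=> r [k [pi [al ->]]]; have [cs [vcs ->]] := pi_to_cs al; exact: H.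
Qed.

Lemma opt_ge0 w : 0 <= opt_score S w.
Proof. by have := opt_ub w [::] isT; rewrite /scr big_nil. Qed.

Lemma opt_cat (w1 w2 : 'I_m -> seq A) :
  opt_score S w1 + opt_score S w2 <= opt_score S (fun j => w1 j ++ w2 j).
Proof.
set w := fun j => _.
have key : forall cs1 cs2, valid w1 cs1 -> valid w2 cs2 ->
    scr w1 cs1 + scr w2 cs2 <= opt_score S w.
  move=> cs1 cs2 /andP[al1 ps1] /andP[al2 ps2].
  pose sh (c : col) : col := [ffun j => (size (w1 j) + c j)%N].
  have -> : scr w2 cs2 = scr w [seq sh c | c <- cs2].
    rewrite /scr big_map; apply: eq_bigr => c _; congr S; apply/ffunP => j.
    by rewrite !ffunE /w nth_cat ltnNge leq_addr /= addKn.
  have -> : scr w1 cs1 = scr w cs1.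
    rewrite /scr big_seq [RHS]big_seq; apply: eq_bigr => c cin; congr S.
    apply/ffunP => j; rewrite !ffunE /w nth_cat.
    by move/allP: al1 => /(_ c cin) /forallP /(_ j) ->.
  rewrite /scr -big_cat -/(scr w _); apply: opt_ub.
  apply/andP; split.
    rewrite all_cat; apply/andP; split.
      apply: sub_all al1 => c /forallP H; apply/forallP => j.
      by rewrite /w size_cat (leq_trans (H j)) // leq_addr.
    rewrite all_map; apply: sub_all al2 => c /forallP H; apply/forallP => j.
    by rewrite /= ffunE /w size_cat ltn_add2l.
  rewrite pairwise_cat; apply/and3P; split.
  - apply/allrelP => c c' cin /mapP[c2 _ ->]; apply/forallP => j; rewrite ffunE.
    move/allP: al1 => /(_ c cin) /forallP /(_ j) H.
    by rewrite (leq_trans H) // leq_addr.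
  - exact: ps1.
  - rewrite pairwise_map; apply: sub_pairwise ps2 => c c' /forallP H.
    by apply/forallP => j; rewrite !ffunE ltn_add2l.
have h1 : forall cs2, valid w2 cs2 -> opt_score S w1 <= opt_score S w - scr w2 cs2.
  move=> cs2 v2; apply: opt_lub => cs1 v1; have := key cs1 cs2 v1 v2; lra.
have : opt_score S w2 <= opt_score S w - opt_score S w1.
  apply: opt_lub => cs2 v2; have := h1 cs2 v2; lra.
lra.
Qed.

Lemma opt_take (w : 'I_m -> seq A) (n : 'I_m -> nat) :
  opt_score S (fun j => take (n j) (w j)) <= opt_score S w.
Proof.
have := opt_cat (fun j => take (n j) (w j)) (fun j => drop (n j) (w j)).
rewrite (_ : (fun j => take (n j) (w j) ++ drop (n j) (w j)) = w).
  by have := opt_ge0 (fun j => drop (n j) (w j)); lra.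
by apply: funext => j; rewrite cat_take_drop.
Qed.

Lemma count_exists (cs : seq col) (P : 'I_m -> pred col) :
  (count (fun c => [exists j, P j c]) cs <= \sum_j count (P j) cs)%N.
Proof.
elim: cs => [|c cs IH]; first by rewrite big1.
rewrite /= big_split /= leq_add //.
case: existsP => // [[j Pj]]; rewrite (bigD1 j) //= Pj; exact: leq_addr.
Qed.

Lemma opt_trunc (w : 'I_m -> seq A) (n : 'I_m -> nat) :
  opt_score S w <= opt_score S (fun j => take (n j) (w j))
                   + B * (\sum_j (size (w j) - n j))%N%:R.
Proof.
set wt := fun j => _.
apply: opt_lub => cs /andP[al ps].
pose P (c : col) := [forall j, (c j < n j)%N].
rewrite /scr (bigID P) /= -big_filter.
have -> : \sum_(i <- [seq x <- cs | P x]) S [ffun j => nth a0 (w j) (i j)]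
        = scr wt [seq x <- cs | P x].
  rewrite /scr big_seq [RHS]big_seq; apply: eq_bigr => c; rewrite mem_filter.
  case/andP=> /forallP Pc _; congr S; apply/ffunP => j; rewrite !ffunE /wt.
  by rewrite nth_take.
apply: lerD.
  apply: opt_ub; apply/andP; split.
    rewrite all_filter; apply/allP => c cin; apply/implyP => /forallP Pc.
    move/allP: al => /(_ c cin) /forallP H; apply/forallP => j.
    by rewrite /wt size_take; case: ifP => _; [exact: Pc | exact: H].
  exact: pairwise_filter.
have cnt : (count (predC P) cs <= \sum_j (size (w j) - n j))%N.
  apply: (@leq_trans (count (fun c : col => [exists j, (n j <= c j)%N]) cs)).
    apply: sub_count => c /=; rewrite /P negb_forall => /existsP[j hj].
    by apply/existsP; exists j; rewrite leqNgt.
  apply: leq_trans (count_exists _ _) _; apply: leq_sum => j _.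
  rewrite -size_filter.
  apply: (@col_bound _ j); first exact: pairwise_filter.
  rewrite all_filter; apply/allP => c cin; apply/implyP => ->.
  by move/allP: al => /(_ c cin) /forallP /(_ j) ->.
have : \sum_(i <- cs | ~~ P i) S [ffun j => nth a0 (w j) (i j)]
        <= (count (predC P) cs)%:R * B.
  elim: cs {al ps cnt} => [|c cs IH]; first by rewrite big_nil mul0r.
  rewrite big_cons /=; case: (P c) => /=; first by rewrite add0n.
  by rewrite -nat1r mulrDl mul1r lerD.
move=> h; apply: le_trans h _; rewrite mulrC; apply: ler_wpM2l; first exact: B0.
by rewrite ler_nat.
Qed.

Hypothesis Sperm : forall (s : 'S_m) (x : apoint A m), S [ffun j => x (s j)] = S x.

Lemma opt_perm (w : 'I_m -> seq A) (s : 'S_m) :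
  opt_score S w <= opt_score S (fun j => w (s j)).
Proof.
apply: opt_lub => cs /andP[al ps].
pose f (c : col) : col := [ffun j => c (s j)].
have -> : scr w cs = scr (fun j => w (s j)) (map f cs).
  rewrite /scr big_map; apply: eq_bigr => c _.
  rewrite -[LHS](Sperm s); congr S; apply/ffunP => j; rewrite !ffunE.
  by [].
apply: opt_ub; apply/andP; split.
  rewrite all_map; apply: sub_all al => c /forallP H; apply/forallP => j.
  by rewrite /= ffunE.
rewrite pairwise_map; apply: sub_pairwise ps => c c' /forallP H.
by apply/forallP => j; rewrite /= !ffunE.
Qed.




Lemma sum_prob N : \sum_(ω : {ffun 'I_m * 'I_N -> A}) sample_prob p ω = 1.
Proof.
rewrite /sample_prob -(bigA_distr_bigA (fun (_ : 'I_m * 'I_N) (a : A) => p a)) /=.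
by rewrite big1 // => x _; rewrite p1.
Qed.

Lemma prob_ge0 N (ω : {ffun 'I_m * 'I_N -> A}) : 0 <= sample_prob p ω.
Proof. by apply: prodr_ge0 => x _. Qed.

Lemma marg {N N'} (h : 'I_m * 'I_N' -> 'I_m * 'I_N) (hi : injective h)
    (φ : {ffun 'I_m * 'I_N' -> A} -> R) :
  \sum_(ω : {ffun 'I_m * 'I_N -> A}) sample_prob p ω * φ [ffun x => ω (h x)]
  = \sum_(ω' : {ffun 'I_m * 'I_N' -> A}) sample_prob p ω' * φ ω'.
Proof.
rewrite (partition_big (fun ω : {ffun 'I_m * 'I_N -> A} => [ffun x => ω (h x)]) predT) //=.
apply: eq_bigr => ω' _.
rewrite (eq_bigr (fun ω => sample_prob p ω * φ ω')); last first.
  by move=> ω /eqP ->.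
rewrite -mulr_suml; congr (_ * _).
pose Q (x : 'I_m * 'I_N) (a : A) := [forall y, (h y == x) ==> (a == ω' y)].
rewrite (eq_bigl (fun ω => ω \in family Q)); last first.
  move=> ω /=; apply/eqP/familyP.
    move=> e x; rewrite /Q -e; apply/forallP => y; apply/implyP => /eqP <-.
    by rewrite ffunE.
  move=> H; apply/ffunP => y; rewrite ffunE.
  by have := H (h y); rewrite /Q => /forallP /(_ y); rewrite eqxx /= => /eqP.
rewrite /sample_prob -(bigA_distr_big_dep Q (fun (_ : 'I_m * 'I_N) (a : A) => p a)) /=.
pose G x := if [pick y | h y == x] is Some y then p (ω' y) else 1.
rewrite (eq_bigr G); last first.
  move=> x _; rewrite /G; case: pickP => [y /eqP hy | none].
    rewrite (eq_bigl (fun a => a == ω' y)) ?big_pred1_eq // => a.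
    apply/forallP/idP => [/(_ y) | /eqP -> y']; first by rewrite hy eqxx.
    by apply/implyP => /eqP; rewrite -hy => /hi ->.
  rewrite (eq_bigl predT) ?p1 // => a; apply/forallP => y; apply/implyP.
  by rewrite none.
rewrite (bigID (mem (h @: [set: 'I_m * 'I_N'])%SET)) /= [X in _ * X]big1 ?mulr1; last first.
  move=> x xn; rewrite /G; case: pickP => // y /eqP hy.
  by move: xn; rewrite -hy imset_f ?inE.
rewrite big_imset; last by move=> y1 y2 _ _; apply: hi.
apply: eq_big => [y|y _]; first by rewrite !inE.
rewrite /G; case: pickP => [y' /eqP /hi -> //| /(_ y)]; by rewrite eqxx.
Qed.

Definition getw {N} (ω : {ffun 'I_m * 'I_N -> A}) (j : 'I_m) (i : nat) : A :=
  if insub i is Some o then ω (j, o) else a0.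

Lemma getwE {N} (ω : {ffun 'I_m * 'I_N -> A}) j (o : 'I_N) : getw ω j o = ω (j, o).
Proof. by rewrite /getw valK. Qed.

Lemma sw_eq {N} (ω : {ffun 'I_m * 'I_N -> A}) ns j :
  sample_word ω ns j = mkseq (getw ω j) (minn (ns j) N).
Proof.
rewrite /sample_word -mkseq_take; congr take.
rewrite /mkseq -val_enum_ord -map_comp; apply: eq_map => o /=.
by rewrite getwE.
Qed.



Lemma EL_N (ns : 'I_m -> nat) N : (forall j, (ns j <= N)%N) ->
  expected_L S p ns = \sum_(ω : {ffun 'I_m * 'I_N -> A})
     sample_prob p ω * opt_score S (fun j => mkseq (getw ω j) (ns j)).
Proof.
move=> HN; rewrite /expected_L /=.
set N0 := (\max_(j < m) ns j)%N.
have le0 : forall j, (ns j <= N0)%N by move=> j; apply: leq_bigmax.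
have leN : (N0 <= N)%N by apply/bigmax_leqP => j _; exact: HN.
rewrite (eq_bigr (fun ω : {ffun 'I_m * 'I_N0 -> A} =>
   sample_prob p ω * opt_score S (fun j => mkseq (getw ω j) (ns j)))); last first.
  move=> ω _; congr (_ * opt_score S _); apply: funext => j.
  by rewrite sw_eq (minn_idPl (le0 j)).
pose h (x : 'I_m * 'I_N0) : 'I_m * 'I_N := (x.1, widen_ord leN x.2).
have hi : injective h.
  move=> [j1 i1] [j2 i2] /(congr1 (fun x => (x.1, val x.2))) /= [-> e].
  by congr pair; apply: val_inj.
rewrite -(marg _ hi (fun ω0 => opt_score S (fun j => mkseq (getw ω0 j) (ns j)))).
apply: eq_bigr => ω _; congr (_ * opt_score S _); apply: funext => j.
apply: eq_in_mkseq => i lt.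
have iN0 : (i < N0)%N by apply: leq_trans (le0 j).
move: (getwE [ffun x => ω (h x)] j (Ordinal iN0)) (getwE ω j (widen_ord leN (Ordinal iN0))).
by move=> /= -> ->; rewrite ffunE.
Qed.

Lemma EL_ge0 ns : 0 <= expected_L S p ns.
Proof.
by apply: sumr_ge0 => ω _; apply: mulr_ge0; [apply: prob_ge0 | apply: opt_ge0].
Qed.

Lemma EL_sup (l l' : 'I_m -> nat) :
  expected_L S p l + expected_L S p l' <= expected_L S p (fun j => (l j + l' j)%N).
Proof.
set N1 := (\max_(j < m) l j)%N; set N2 := (\max_(j < m) l' j)%N.
have le1 : forall j, (l j <= N1)%N by move=> j; apply: leq_bigmax.
have le2 : forall j, (l' j <= N2)%N by move=> j; apply: leq_bigmax.
rewrite (@EL_N (fun j => (l j + l' j)%N) (N1 + N2)); last by move=> j; apply: leq_add.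
rewrite (@EL_N l (N1 + N2)); last by move=> j; apply: leq_trans (le1 j) (leq_addr _ _).
rewrite (@EL_N l' N2) //.
have hl : forall j (i : 'I_N2), (l j + i < N1 + N2)%N.
  by move=> j i; rewrite -addnS; apply: leq_add.
pose h (x : 'I_m * 'I_N2) : 'I_m * 'I_(N1 + N2) := (x.1, Ordinal (hl x.1 x.2)).
have hi : injective h.
  move=> [j1 i1] [j2 i2] /(congr1 (fun x => (x.1, val x.2))) /= [e1 e2].
  by subst j2; congr pair; apply: val_inj; apply: (addnI e2).
rewrite -(marg _ hi (fun ω0 => opt_score S (fun j => mkseq (getw ω0 j) (l' j)))).
rewrite -big_split; apply: ler_sum => ω _ /=; rewrite -mulrDr.
apply: ler_wpM2l; first exact: prob_ge0.
have -> : (fun j => mkseq (getw [ffun x => ω (h x)] j) (l' j))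
        = (fun j => mkseq (fun i => getw ω j (l j + i)%N) (l' j)).
  apply: funext => j; apply: eq_in_mkseq => i lt.
  have iN2 : (i < N2)%N by apply: leq_trans (le2 j).
  move: (getwE [ffun x => ω (h x)] j (Ordinal iN2)) (getwE ω j (Ordinal (hl j (Ordinal iN2)))).
  by move=> /= -> ->; rewrite ffunE.
have -> : (fun j => mkseq (getw ω j) (l j + l' j)%N)
        = (fun j => mkseq (getw ω j) (l j) ++ mkseq (fun i => getw ω j (l j + i)%N) (l' j)).
  by apply: funext => j; rewrite mkseq_add.
exact: opt_cat.
Qed.

Lemma sumP_le N (X Y : {ffun 'I_m * 'I_N -> A} -> R) c :
  (forall ω, X ω <= Y ω + c) ->
  \sum_ω sample_prob p ω * X ω <= \sum_ω sample_prob p ω * Y ω + c.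
Proof.
move=> H; rewrite -[c in X in _ <= X]mul1r -(sum_prob N) mulr_suml -big_split.
apply: ler_sum => ω _ /=; rewrite -mulrDr; apply: ler_wpM2l; [exact: prob_ge0 | exact: H].
Qed.

Lemma EL_lip (l l' : 'I_m -> nat) :
  expected_L S p l - expected_L S p l' <= B * \sum_j `|(l j)%:R - (l' j)%:R|.
Proof.
pose l'' j := minn (l j) (l' j).
set N := (\max_(j < m) l j + \max_(j < m) l' j)%N.
have le1 : forall j, (l j <= N)%N.
  by move=> j; apply: leq_trans (leq_addr _ _); apply: leq_bigmax.
have le2 : forall j, (l' j <= N)%N.
  by move=> j; apply: leq_trans (leq_addl _ _); apply: leq_bigmax.
have le3 : forall j, (l'' j <= N)%N by move=> j; apply: leq_trans (geq_minl _ _) (le1 j).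
have a1 : expected_L S p l'' <= expected_L S p l'.
  rewrite (@EL_N l'' N) // (@EL_N l' N) //; apply: ler_sum => ω _.
  apply: ler_wpM2l; first exact: prob_ge0.
  have -> : (fun j => mkseq (getw ω j) (l'' j))
          = (fun j => take (l'' j) (mkseq (getw ω j) (l' j))).
    by apply: funext => j; rewrite mkseq_take (minn_idPl (geq_minr _ _)).
  exact: opt_take.
have a2 : expected_L S p l <= expected_L S p l'' + B * (\sum_j (l j - l'' j))%N%:R.
  rewrite (@EL_N l N) // (@EL_N l'' N) //; apply: sumP_le => ω.
  have := opt_trunc (fun j => mkseq (getw ω j) (l j)) l''.
  rewrite (_ : (fun j => take (l'' j) (mkseq (getw ω j) (l j)))
             = (fun j => mkseq (getw ω j) (l'' j))); last first.
    by apply: funext => j; rewrite mkseq_take (minn_idPl (geq_minl _ _)).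
  by under eq_bigr do rewrite size_mkseq.
have a3 : ((\sum_j (l j - l'' j))%N%:R : R) <= \sum_j `|(l j)%:R - (l' j)%:R|.
  rewrite natr_sum; apply: ler_sum => j _; rewrite /l'' /=.
  case: (leqP (l j) (l' j)) => h.
    by rewrite subnn normr_ge0.
  rewrite natrB ?(ltnW h) //; exact: ler_norm.
have := ler_wpM2l B0 a3; lra.
Qed.

Lemma EL_perm (s : 'S_m) (l : 'I_m -> nat) :
  expected_L S p l <= expected_L S p (fun j => l (s j)).
Proof.
set N := (\max_(j < m) l j)%N.
have le1 : forall j, (l j <= N)%N by move=> j; apply: leq_bigmax.
rewrite (@EL_N l N) // (@EL_N (fun j => l (s j)) N) //.
pose h (x : 'I_m * 'I_N) : 'I_m * 'I_N := ((s^-1)%g x.1, x.2).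
have hi : injective h.
  move=> [j1 i1] [j2 i2] [/perm_inj -> ->] //.
rewrite -(marg _ hi (fun ω0 => opt_score S (fun j => mkseq (getw ω0 j) (l j)))).
apply: ler_sum => ω _; apply: ler_wpM2l; first exact: prob_ge0.
apply: le_trans (opt_perm _ s) _.
rewrite le_eqVlt; apply/orP; left; apply/eqP; congr opt_score; apply: funext => j.
apply: eq_in_mkseq => i lt.
have iN : (i < N)%N by exact: leq_trans lt (le1 (s j)).
move: (getwE [ffun x => ω (h x)] (s j) (Ordinal iN)) (getwE ω j (Ordinal iN)).
by move=> /= -> ->; rewrite ffunE /h /= permK.
Qed.

End Main.

Local Close Scope classical_set_scope.

Theorem proposition3p1 (R : realType) (m : nat) (A : {fset R})
    (p : A -> R) (S : apoint A m -> R) :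
  (2 <= m)%N ->
  (* law of the i.i.d. letters: a probability distribution on A *)
  (forall a, 0 <= p a) -> \sum_(a : A) p a = 1 ->
  (* hypotheses on S *)
  (forall x, 0 <= S x) ->
  (exists x, S x != 0) ->
  (forall (s : 'S_m) (x : apoint A m), S [ffun j => x (s j)] = S x) ->
  (exists B : R, forall x, S x <= B) ->
  (exists D : R, 0 < D /\
     forall x y : apoint A m, (#|[set j | x j != y j]| <= 1)%N ->
       `|S x - S y| <= D) ->
  (* concavity on Q *)
  (forall (q1 q2 : 'I_m -> R) (t : R), domQ q1 -> domQ q2 -> 0 <= t <= 1 ->
     t * gamma_tilde S p q1 + (1 - t) * gamma_tilde S p q2
       <= gamma_tilde S p (fun j => t * q1 j + (1 - t) * q2 j))
  /\
  (* maximum at q = (1,...,1) *)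
  (forall q : 'I_m -> R, domQ q -> gamma_tilde S p q <= gamma_tilde S p (fun _ => 1)).
Proof.
move=> m2 p0 p1 S0 _ Sperm [B SB] _.
have m0 : (0 < m)%N by apply: leq_trans m2.
pose j0 : 'I_m := Ordinal m0.
have [a0 _ | none] := pickP (@predT A); last first.
  by move: p1; rewrite big_pred0 // => /eqP; rewrite eq_sym oner_eq0.
pose F := fun l => expected_L S p l.
have B0' := @B0 R A m S a0 B S0 SB.
have F0 : forall l, 0 <= F l := @EL_ge0 R A m S p p0 a0 B S0 SB j0.
have Fs := @EL_sup R A m S p p0 p1 a0 B S0 SB j0.
have Fl := @EL_lip R A m S p p0 p1 a0 B S0 SB j0.
have Fp := @EL_perm R A m S p p0 p1 a0 B S0 SB j0 Sperm.
have gE : forall q, gamma_tilde S p q = gam R m F q by [].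
split.
  move=> q1 q2 t [q10 _] [q20 _] t01; rewrite !gE.
  apply: (@gam_concave R m F B B0' F0 Fs Fl) => // j; exact: ltW.
move=> q [q0 qs]; rewrite !gE.
apply: (@gam_max R m F B B0' F0 Fs Fl Fp q m0) => // j; exact: ltW.
Qed.
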